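(* Let $v\ge2$ and $M,N\in{\cal I}_v$ with $N=N_1+N_2$, where $N_1=\beta M$ for some $\beta\in\mathbb R$ and $M\perp N_2$ with respect to the scalar product $(x,y):=\mathrm{Re}(xy^* )$. Then $$[e^M,e^N]=2\,\frac{\sin|M|}{|M|}\,\frac{\sin|N|}{|N|}\,MN_2 .$$
   Context: ${\cal A}_v$ is the real Cayley-Dickson algebra of dimension $2^v$ (iterated doubling of $\mathbb R$; ${\cal A}_2=\mathbb H$), $z^*$ is conjugation, $\mathrm{Re}(z)=(z+z^* )/2$, $|z|=(zz^* )^{1/2}$, and ${\cal I}_v=\{z\in{\cal A}_v:\mathrm{Re}(z)=0\}$. For $M\in{\cal I}_v$, $e^M=\cos|M|+\frac{\sin|M|}{|M|}M$ (with $\frac{\sin|M|}{|M|}:=1$ when $M=0$). $[a,b]:=ab-ba$. *)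

(* Defs.v *)
From Stdlib Require Import Reals.
Open Scope R_scope.

(* Real Cayley-Dickson algebra A_v of dimension 2^v, built by iterated
   doubling: A_0 = R, A_(v+1) = A_v x A_v with
     (a,b) + (c,d) = (a+c, b+d)
     (a,b)(c,d)    = (ac - conj(d) b, d a + b conj(c))
     (a,b)^*       = (conj a, -b). *)
Fixpoint CD (v : nat) : Type :=
  match v with O => R | S w => (CD w * CD w)%type end.

Fixpoint cd_real (v : nat) : R -> CD v :=
  match v return R -> CD v with
  | O => fun r => r
  | S w => fun r => (cd_real w r, cd_real w 0)
  end.

Fixpoint cd_add (v : nat) : CD v -> CD v -> CD v :=
  match v return CD v -> CD v -> CD v with
  | O => Rplus
  | S w => fun x y => (cd_add w (fst x) (fst y), cd_add w (snd x) (snd y))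
  end.

Fixpoint cd_opp (v : nat) : CD v -> CD v :=
  match v return CD v -> CD v with
  | O => Ropp
  | S w => fun x => (cd_opp w (fst x), cd_opp w (snd x))
  end.

Definition cd_sub (v : nat) (x y : CD v) : CD v := cd_add v x (cd_opp v y).

Fixpoint cd_scale (v : nat) : R -> CD v -> CD v :=
  match v return R -> CD v -> CD v with
  | O => Rmult
  | S w => fun r x => (cd_scale w r (fst x), cd_scale w r (snd x))
  end.

Fixpoint cd_conj (v : nat) : CD v -> CD v :=
  match v return CD v -> CD v with
  | O => fun x => x
  | S w => fun x => (cd_conj w (fst x), cd_opp w (snd x))
  end.

Fixpoint cd_mul (v : nat) : CD v -> CD v -> CD v :=
  match v return CD v -> CD v -> CD v with
  | O => Rmult
  | S w => fun x y =>
      let a := fst x in let b := snd x in let c := fst y in let d := snd y in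
      (cd_sub w (cd_mul w a c) (cd_mul w (cd_conj w d) b),
       cd_add w (cd_mul w d a) (cd_mul w b (cd_conj w c)))
  end.

(* Real part Re(z) = (z + z^* )/2, which is a real scalar; here its real value:
   the first (real) coordinate of z. *)
Fixpoint cd_re (v : nat) : CD v -> R :=
  match v return CD v -> R with
  | O => fun x => x
  | S w => fun x => cd_re w (fst x)
  end.

Definition cd_norm (v : nat) (z : CD v) : R := sqrt (cd_re v (cd_mul v z (cd_conj v z))).

Definition cd_dot (v : nat) (x y : CD v) : R := cd_re v (cd_mul v x (cd_conj v y)).

Definition cd_imag (v : nat) (z : CD v) : Prop := cd_re v z = 0.

Definition sinc (t : R) : R := if Req_EM_T t 0 then 1 else sin t / t.

Definition cd_exp (v : nat) (M : CD v) : CD v :=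
  cd_add v (cd_real v (cos (cd_norm v M))) (cd_scale v (sinc (cd_norm v M)) M).

Definition cd_comm (v : nat) (a b : CD v) : CD v :=
  cd_sub v (cd_mul v a b) (cd_mul v b a).

(* Main.v *)
Require Import Defs.
From Stdlib Require Import Reals Lra.
Open Scope R_scope.

Lemma add_comm v : forall x y : CD v, cd_add v x y = cd_add v y x.
Proof. induction v as [|w IH]; simpl; intros. ring. f_equal; apply IH. Qed.

Lemma add_assoc v : forall x y z : CD v,
  cd_add v x (cd_add v y z) = cd_add v (cd_add v x y) z.
Proof. induction v as [|w IH]; simpl; intros. ring. f_equal; apply IH. Qed.

Lemma add_0l v : forall x : CD v, cd_add v (cd_real v 0) x = x.
Proof. induction v as [|w IH]; simpl; intros. ring. destruct x; simpl; f_equal; apply IH. Qed.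

Lemma add_0r v : forall x : CD v, cd_add v x (cd_real v 0) = x.
Proof. intros; rewrite add_comm; apply add_0l. Qed.

Lemma add_oppr v : forall x : CD v, cd_add v x (cd_opp v x) = cd_real v 0.
Proof. induction v as [|w IH]; simpl; intros. ring. f_equal; apply IH. Qed.

Lemma add_oppl v : forall x : CD v, cd_add v (cd_opp v x) x = cd_real v 0.
Proof. intros; rewrite add_comm; apply add_oppr. Qed.

Lemma scale_addr v : forall r (x y : CD v),
  cd_scale v r (cd_add v x y) = cd_add v (cd_scale v r x) (cd_scale v r y).
Proof. induction v as [|w IH]; simpl; intros. ring. f_equal; apply IH. Qed.

Lemma scale_addl v : forall r s (x : CD v),
  cd_scale v (r + s) x = cd_add v (cd_scale v r x) (cd_scale v s x).
Proof. induction v as [|w IH]; simpl; intros. ring. f_equal; apply IH. Qed.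

Lemma scale_scale v : forall r s (x : CD v),
  cd_scale v r (cd_scale v s x) = cd_scale v (r * s) x.
Proof. induction v as [|w IH]; simpl; intros. ring. f_equal; apply IH. Qed.

Lemma scale_1 v : forall (x : CD v), cd_scale v 1 x = x.
Proof. induction v as [|w IH]; simpl; intros. ring. destruct x; simpl; f_equal; apply IH. Qed.

Lemma scale_real v : forall r s, cd_scale v r (cd_real v s) = cd_real v (r * s).
Proof. induction v as [|w IH]; simpl; intros. ring. rewrite !IH, Rmult_0_r; reflexivity. Qed.

Lemma scale_0 v : forall (x : CD v), cd_scale v 0 x = cd_real v 0.
Proof. induction v as [|w IH]; simpl; intros. ring. f_equal; apply IH. Qed.

Lemma real_add v : forall r s, cd_real v (r + s) = cd_add v (cd_real v r) (cd_real v s).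
Proof. induction v as [|w IH]; simpl; intros. ring. rewrite <- !IH, Rplus_0_r; reflexivity. Qed.

Lemma opp_real v : forall r, cd_opp v (cd_real v r) = cd_real v (- r).
Proof. induction v as [|w IH]; simpl; intros. ring. rewrite !IH, Ropp_0; reflexivity. Qed.

Lemma opp_opp v : forall (x : CD v), cd_opp v (cd_opp v x) = x.
Proof. induction v as [|w IH]; simpl; intros. ring. destruct x; simpl; f_equal; apply IH. Qed.

Lemma opp_add v : forall (x y : CD v),
  cd_opp v (cd_add v x y) = cd_add v (cd_opp v x) (cd_opp v y).
Proof. induction v as [|w IH]; simpl; intros. ring. f_equal; apply IH. Qed.

Lemma opp_scale v : forall r (x : CD v), cd_opp v x = cd_scale v (-1) x /\
  cd_opp v (cd_scale v r x) = cd_scale v r (cd_opp v x).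
Proof. induction v as [|w IH]; simpl; intros. split; ring.
  split; f_equal; first [apply (proj1 (IH r _)) | apply (proj2 (IH r _))]. Qed.

Lemma opp_eq_scale v : forall (x : CD v), cd_opp v x = cd_scale v (-1) x.
Proof. intros; apply (opp_scale v 0). Qed.

Lemma conj_add v : forall (x y : CD v),
  cd_conj v (cd_add v x y) = cd_add v (cd_conj v x) (cd_conj v y).
Proof. induction v as [|w IH]; simpl; intros. ring. rewrite IH, opp_add; reflexivity. Qed.

Lemma conj_scale v : forall r (x : CD v),
  cd_conj v (cd_scale v r x) = cd_scale v r (cd_conj v x).
Proof. induction v as [|w IH]; simpl; intros. ring. rewrite IH.
  f_equal. apply opp_scale. Qed.

Lemma conj_opp v : forall (x : CD v), cd_conj v (cd_opp v x) = cd_opp v (cd_conj v x).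
Proof. intros; rewrite !opp_eq_scale; apply conj_scale. Qed.

Lemma conj_conj v : forall (x : CD v), cd_conj v (cd_conj v x) = x.
Proof. induction v as [|w IH]; simpl; intros. ring. destruct x; simpl; rewrite IH, opp_opp; reflexivity. Qed.

Lemma conj_real v : forall r, cd_conj v (cd_real v r) = cd_real v r.
Proof. induction v as [|w IH]; simpl; intros. ring. rewrite IH, opp_real, Ropp_0; reflexivity. Qed.

Lemma add_swap4 v : forall (a b c d : CD v),
  cd_add v (cd_add v a b) (cd_add v c d) = cd_add v (cd_add v a c) (cd_add v b d).
Proof. intros. rewrite <- !add_assoc. f_equal. rewrite !add_assoc. f_equal. apply add_comm. Qed.

Lemma mul_real v : forall r (x : CD v),
  cd_mul v (cd_real v r) x = cd_scale v r x /\ cd_mul v x (cd_real v r) = cd_scale v r x.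
Proof. induction v as [|w IH]; simpl; intros. split; ring.
  destruct x as [a b]; simpl; unfold cd_sub.
  rewrite !conj_real; repeat rewrite (proj1 (IH _ _)); repeat rewrite (proj2 (IH _ _)).
  rewrite !scale_0, opp_real, Ropp_0, !add_0r, !add_0l.
  split; reflexivity. Qed.

Lemma mul_add v : forall (x y z : CD v),
  cd_mul v (cd_add v x y) z = cd_add v (cd_mul v x z) (cd_mul v y z) /\
  cd_mul v z (cd_add v x y) = cd_add v (cd_mul v z x) (cd_mul v z y).
Proof. induction v as [|w IH]; simpl; intros. split; ring.
  destruct x as [a b], y as [a' b'], z as [c d]; simpl; unfold cd_sub.
  rewrite !conj_add; repeat rewrite (proj1 (IH _ _ _)); repeat rewrite (proj2 (IH _ _ _)).
  rewrite !opp_add.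
  split; f_equal; apply add_swap4. Qed.

Lemma mul_scale v : forall r (x y : CD v),
  cd_mul v (cd_scale v r x) y = cd_scale v r (cd_mul v x y) /\
  cd_mul v x (cd_scale v r y) = cd_scale v r (cd_mul v x y).
Proof. induction v as [|w IH]; simpl; intros. split; ring.
  destruct x as [a b], y as [c d]; simpl; unfold cd_sub.
  rewrite !conj_scale; repeat rewrite (proj1 (IH _ _ _)); repeat rewrite (proj2 (IH _ _ _)).
  rewrite !scale_addr,
    !(proj2 (opp_scale _ _ _)). split; reflexivity. Qed.

Lemma mul_oppl v : forall (x y : CD v), cd_mul v (cd_opp v x) y = cd_opp v (cd_mul v x y).
Proof. intros; rewrite !opp_eq_scale; apply mul_scale. Qed.
Lemma mul_oppr v : forall (x y : CD v), cd_mul v x (cd_opp v y) = cd_opp v (cd_mul v x y).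
Proof. intros; rewrite !opp_eq_scale; apply mul_scale. Qed.

Lemma conj_mul v : forall (x y : CD v),
  cd_conj v (cd_mul v x y) = cd_mul v (cd_conj v y) (cd_conj v x).
Proof. induction v as [|w IH]; simpl; intros. ring.
  destruct x as [a b], y as [c d]; simpl; unfold cd_sub.
  rewrite !conj_add, !conj_opp, !IH, !conj_conj, ?conj_opp, opp_add,
    !mul_oppl, !mul_oppr, !opp_opp. f_equal. apply add_comm. Qed.

Lemma re_add v : forall (x y : CD v), cd_re v (cd_add v x y) = cd_re v x + cd_re v y.
Proof. induction v as [|w IH]; simpl; intros. ring. apply IH. Qed.
Lemma re_scale v : forall r (x : CD v), cd_re v (cd_scale v r x) = r * cd_re v x.
Proof. induction v as [|w IH]; simpl; intros. ring. apply IH. Qed.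

Lemma add_conj v : forall (x : CD v), cd_add v x (cd_conj v x) = cd_real v (2 * cd_re v x).
Proof. induction v as [|w IH]; simpl; intros. ring. destruct x; simpl.
  rewrite IH, add_oppr. reflexivity. Qed.

Lemma add_cancel v : forall (x y : CD v), cd_add v x y = cd_real v 0 -> y = cd_opp v x.
Proof. intros x y H. rewrite <- (add_0l v y), <- (add_oppl v x), <- add_assoc, H, add_0r.
  reflexivity. Qed.

Lemma imag_conj v : forall (x : CD v), cd_re v x = 0 -> cd_conj v x = cd_opp v x.
Proof. intros x H. apply add_cancel. rewrite add_conj, H, Rmult_0_r. reflexivity. Qed.

Lemma comm_addl v : forall (x y z : CD v),
  cd_comm v (cd_add v x y) z = cd_add v (cd_comm v x z) (cd_comm v y z).
Proof. intros; unfold cd_comm, cd_sub.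
  rewrite (proj1 (mul_add _ _ _ _)), (proj2 (mul_add _ _ _ _)), opp_add. apply add_swap4. Qed.
Lemma comm_addr v : forall (x y z : CD v),
  cd_comm v z (cd_add v x y) = cd_add v (cd_comm v z x) (cd_comm v z y).
Proof. intros; unfold cd_comm, cd_sub.
  rewrite (proj1 (mul_add _ _ _ _)), (proj2 (mul_add _ _ _ _)), opp_add. apply add_swap4. Qed.
Lemma comm_scalel v : forall r (x y : CD v),
  cd_comm v (cd_scale v r x) y = cd_scale v r (cd_comm v x y).
Proof. intros; unfold cd_comm, cd_sub.
  rewrite (proj1 (mul_scale _ _ _ _)), (proj2 (mul_scale _ _ _ _)), scale_addr,
   (proj2 (opp_scale _ _ _)). reflexivity. Qed.
Lemma comm_scaler v : forall r (x y : CD v),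
  cd_comm v x (cd_scale v r y) = cd_scale v r (cd_comm v x y).
Proof. intros; unfold cd_comm, cd_sub.
  rewrite (proj1 (mul_scale _ _ _ _)), (proj2 (mul_scale _ _ _ _)), scale_addr,
   (proj2 (opp_scale _ _ _)). reflexivity. Qed.
Lemma comm_reall v : forall r (x : CD v), cd_comm v (cd_real v r) x = cd_real v 0.
Proof. intros; unfold cd_comm, cd_sub.
  rewrite (proj1 (mul_real _ _ _)), (proj2 (mul_real _ _ _)). apply add_oppr. Qed.
Lemma comm_realr v : forall r (x : CD v), cd_comm v x (cd_real v r) = cd_real v 0.
Proof. intros; unfold cd_comm, cd_sub.
  rewrite (proj1 (mul_real _ _ _)), (proj2 (mul_real _ _ _)). apply add_oppr. Qed.

Theorem lemma9 (v : nat) (M N N1 N2 : CD v) (beta : R) :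
  (2 <= v)%nat ->
  cd_imag v M -> cd_imag v N ->
  N = cd_add v N1 N2 ->
  N1 = cd_scale v beta M ->
  cd_dot v M N2 = 0 ->
  cd_comm v (cd_exp v M) (cd_exp v N) =
  cd_scale v (2 * sinc (cd_norm v M) * sinc (cd_norm v N)) (cd_mul v M N2).
Proof.
  intros _ HM HN HN12 HN1 Hdot.
  unfold cd_imag in *.
  assert (HN2 : cd_re v N2 = 0).
  { rewrite HN12, HN1, re_add, re_scale, HM in HN. lra. }
  assert (Hanti : cd_mul v N2 M = cd_opp v (cd_mul v M N2)).
  { unfold cd_dot in Hdot.
    pose proof (add_conj v (cd_mul v M (cd_conj v N2))) as H.
    rewrite Hdot, Rmult_0_r, conj_mul, conj_conj, (imag_conj v M HM),
      (imag_conj v N2 HN2), mul_oppr, mul_oppr in H.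
    apply add_cancel in H. rewrite opp_opp in H.
    rewrite <- H, opp_opp. reflexivity. }
  unfold cd_exp.
  set (a := sinc (cd_norm v M)). set (b := sinc (cd_norm v N)).
  rewrite comm_addl, !comm_addr, !comm_reall, !comm_scalel, !comm_realr,
    !scale_real, Rmult_0_r, !add_0l, comm_scaler.
  rewrite HN12, HN1, comm_addr, comm_scaler.
  assert (Hmm : cd_comm v M M = cd_real v 0).
  { unfold cd_comm, cd_sub. apply add_oppr. }
  rewrite Hmm, scale_real, Rmult_0_r, add_0l.
  unfold cd_comm, cd_sub. rewrite Hanti, opp_opp.
  rewrite <- (scale_1 v (cd_mul v M N2)) at 1 2.
  rewrite <- scale_addl, !scale_scale.
  f_equal. ring.
Qed.
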